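(* Consider the D2D channel assignment game described in the context, with utilities $\hat U^N_i(a)=\frac1N\sum_{k=1}^N\hat U_{i,k}(a)$, where each $\hat U_{i,k}(a)$ is an independent copy of $$\hat U_i(a)=\sum_{j\in\mathcal{D}(a_i)}\hat\nu_j(a_i,a_{-i})-\sum_{j\in\mathcal{D}(a_i)\setminus\{i\}}\hat\nu^{(-i)}_j(a_{-i}).$$ Then this game is a noisy potential game with potential $\phi(a)=\mathbb{E}\big[\sum_{j\in\mathcal{D}}\hat\nu_j(a)\big]$, i.e. with $U_i=\mathbb{E}[\hat U^N_i]$, for all $i\in\mathcal{D}$, $a_i,a_i'\in\mathcal{F}$, $a_{-i}\in\mathcal{F}^{|\mathcal{D}|-1}$: $U_i(a_i,a_{-i})-U_i(a_i',a_{-i})=\phi(a_i,a_{-i})-\phi(a_i',a_{-i})$.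
   Context: A finite set $\mathcal{D}$ of users (players) and a finite set $\mathcal{F}$ of orthogonal channels; each player's action set is $X_i=\mathcal{F}$, and an action profile $a=(a_i,a_{-i})\in\mathcal{F}^{|\mathcal{D}|}$ assigns one channel to each user. $\mathcal{D}(a_i)=\{j\in\mathcal{D}:a_j=a_i\}$ is the set of users on the same channel as $i$. User $j$ on channel $c$ has SINR $\gamma_j=P_jg_j/(\sum_{l\in\mathcal{D}(c)\setminus\{j\}}P_lg_{l,j}+P_0)$ with transmit powers $P_l>0$, noise power $P_0>0$, and random channel power gains $g_j,g_{l,j}$; its measured (random) data rate is $\hat\nu_j(a)=W_c\log_2(1+\gamma_j)$, assumed to have finite expectation. $\hat\nu^{(-i)}_j(a_{-i})$ denotes the measured rate of user $j$ when user $i$ does not transmit (so only users other than $i$ on $j$'s channel interfere). A game with random utilities $\hat U_i$ is a noisy potential game if the game with expected utilities $U_i=\mathbb{E}[\hat U_i]$ is an exact potential game. *)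

(* Defs.v *)
From mathcomp Require Import all_boot all_order all_algebra.
From mathcomp Require Import all_classical all_reals all_analysis.
Set Implicit Arguments. Unset Strict Implicit. Unset Printing Implicit Defensive.
Import Order.TTheory GRing.Theory Num.Theory.
Local Open Scope classical_set_scope.
Local Open Scope ring_scope.

Definition upd (D F : finType) (a : {ffun D -> F}) (i : D) (c : F) : {ffun D -> F} :=
  [ffun j => if j == i then c else a j].

(* SINR of user j under profile a when only the users in the set [act]
   transmit (besides j itself); interferers are active users on j's channel. *)
Definition sinr (R : realType) (Omega : Type) (D F : finType)
  (Pw : D -> R) (P0 : R) (g : D -> Omega -> R) (G : D -> D -> Omega -> R)
  (act : pred D) (a : {ffun D -> F}) (j : D) (w : Omega) : R :=
  Pw j * g j w /
  (\sum_(l | [&& l != j, a l == a j & act l]) Pw l * G l j w + P0).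

Definition rate (R : realType) (Omega : Type) (D F : finType) (W : F -> R)
  (Pw : D -> R) (P0 : R) (g : D -> Omega -> R) (G : D -> D -> Omega -> R)
  (act : pred D) (a : {ffun D -> F}) (j : D) (w : Omega) : R :=
  W (a j) * (ln (1 + sinr Pw P0 g G act a j w) / ln 2).

Definition nuhat (R : realType) (Omega : Type) (D F : finType) (W : F -> R)
  (Pw : D -> R) (P0 : R) (g : D -> Omega -> R) (G : D -> D -> Omega -> R)
  (a : {ffun D -> F}) (j : D) : Omega -> R :=
  rate W Pw P0 g G predT a j.

Definition nuhat_wo (R : realType) (Omega : Type) (D F : finType) (W : F -> R)
  (Pw : D -> R) (P0 : R) (g : D -> Omega -> R) (G : D -> D -> Omega -> R)
  (i : D) (a : {ffun D -> F}) (j : D) : Omega -> R :=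
  rate W Pw P0 g G (predC1 i) a j.

Definition Uhat (R : realType) (Omega : Type) (D F : finType) (W : F -> R)
  (Pw : D -> R) (P0 : R) (g : D -> Omega -> R) (G : D -> D -> Omega -> R)
  (i : D) (a : {ffun D -> F}) (w : Omega) : R :=
  \sum_(j | a j == a i) nuhat W Pw P0 g G a j w
  - \sum_(j | (a j == a i) && (j != i)) nuhat_wo W Pw P0 g G i a j w.

Definition ident_distr (R : realType) (d : measure_display) (T : measurableType d)
  (P : probability T R) (X Y : T -> R) : Prop :=
  forall B : set R, measurable B -> P (X @^-1` B) = P (Y @^-1` B).

Definition mutually_independent (R : realType) (d : measure_display)
  (T : measurableType d) (P : probability T R) (I : finType) (X : I -> T -> R) : Prop :=
  forall B : I -> set R, (forall k, measurable (B k)) ->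
    P (\bigcap_(k in [set: I]) (X k @^-1` B k)) = (\prod_(k : I) P (X k @^-1` B k))%E.

(* Main.v *)
Require Import Defs.
From mathcomp Require Import all_boot all_order all_algebra.
From mathcomp Require Import all_classical all_reals all_analysis.
From mathcomp Require Import measurable_realfun.
Import Order.TTheory GRing.Theory Num.Theory.
Local Open Scope classical_set_scope.
Local Open Scope ring_scope.

Section Helpers.
Context (R : realType) (d : measure_display) (Omega : measurableType d)
  (P : probability Omega R).

Lemma ident_int (X Y : Omega -> R) (f : R -> \bar R) :
  measurable_fun setT X -> measurable_fun setT Y ->
  measurable_fun [set: R] f -> (forall y, (0 <= f y)%E) ->
  (forall B : set R, measurable B -> P (X @^-1` B) = P (Y @^-1` B)) ->
  (\int[P]_w f (X w) = \int[P]_w f (Y w))%E.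
Proof.
move=> mX mY mf f0 hXY.
have eX := ge0_integral_pushforward mX P measurableT mf (fun y _ => f0 y).
have eY := ge0_integral_pushforward mY P measurableT mf (fun y _ => f0 y).
rewrite preimage_setT in eX; rewrite preimage_setT in eY.
rewrite -eX -eY; apply: eq_measure_integral => A mA _.
exact: hXY.
Qed.

Lemma ident_E (X Y : Omega -> R) :
  measurable_fun setT X -> measurable_fun setT Y ->
  (forall B : set R, measurable B -> P (X @^-1` B) = P (Y @^-1` B)) ->
  (\int[P]_w (X w)%:E = \int[P]_w (Y w)%:E)%E.
Proof.
move=> mX mY hXY.
rewrite integralE [RHS]integralE.
rewrite (funepos_comp EFin X) (funeneg_comp EFin X).
rewrite (funepos_comp EFin Y) (funeneg_comp EFin Y).
congr (_ - _)%E; apply: ident_int => //;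
  try (by move=> y; apply: funepos_ge0); try (by move=> y; apply: funeneg_ge0);
  try (by apply: measurable_realfun.measurable_funepos; exact: EFin_measurable);
  try (by apply: measurable_realfun.measurable_funeneg; exact: EFin_measurable).
Qed.

Lemma ident_integrable (X Y : Omega -> R) :
  measurable_fun setT X -> measurable_fun setT Y ->
  (forall B : set R, measurable B -> P (X @^-1` B) = P (Y @^-1` B)) ->
  P.-integrable setT (EFin \o Y) -> P.-integrable setT (EFin \o X).
Proof.
move=> mX mY hXY /integrableP [_ hY]; apply/integrableP; split.
  exact/measurable_EFinP.
rewrite (_ : (\int[P]_(x in setT) `|(EFin \o X) x|)%E =
   \int[P]_w (fun y : R => `|y|%:E) (X w))%E; last first.
  by apply: eq_integral => w _; rewrite /= ?abse_EFin.
rewrite (@ident_int X Y (fun y : R => `|y|%:E)) //.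
- apply: measurableT_comp; [exact: EFin_measurable | exact: normr_measurable].
Qed.

Lemma int_sum (I : finType) (p : pred I) (f : I -> Omega -> R) :
  (forall j, P.-integrable setT (EFin \o f j)) ->
  P.-integrable setT (EFin \o (fun w => \sum_(j | p j) f j w)) /\
  (\int[P]_w (\sum_(j | p j) f j w)%:E =
     \sum_(j | p j) \int[P]_w (f j w)%:E)%E.
Proof.
move=> hf.
have e : (EFin \o fun w => \sum_(j | p j) f j w) =
    (fun w => \sum_(j | p j) (f j w)%:E)%E.
  by apply/funext=> w /=; rewrite sumEFin.
split; first by rewrite e; apply: integrable_sum => // j _; exact: hf.
under eq_integral do rewrite -sumEFin.
exact: (@integral_sum _ _ _ P setT measurableT _ (fun j w => (f j w)%:E) hf).
Qed.

End Helpers.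
Arguments ident_E {R d Omega P X Y}.
Arguments ident_integrable {R d Omega P X Y}.
Arguments int_sum {R d Omega P I} p {f}.

Lemma key_id (R : realType) (Omega : Type) (D F : finType) (W : F -> R)
  (Pw : D -> R) (P0 : R) (g : D -> Omega -> R) (G : D -> D -> Omega -> R)
  (i : D) (a : {ffun D -> F}) (c : F) (w : Omega) :
  Uhat W Pw P0 g G i (upd a i c) w =
  \sum_j nuhat W Pw P0 g G (upd a i c) j w
  - \sum_(j | j != i) nuhat_wo W Pw P0 g G i a j w.
Proof.
set b := upd a i c.
have L1 j : j != i -> nuhat_wo W Pw P0 g G i b j w = nuhat_wo W Pw P0 g G i a j w.
  move=> ji; rewrite /nuhat_wo /rate /sinr /b !ffunE (negbTE ji).
  congr (_ * (ln (1 + _ / (_ + _)) / _)).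
  apply: eq_bigl => l /=; rewrite !ffunE.
  by case: (eqVneq l i) => [->|li] /=; rewrite ?eqxx ?andbF.
have L2 j : b j != b i -> nuhat W Pw P0 g G b j w = nuhat_wo W Pw P0 g G i b j w.
  move=> bji; rewrite /nuhat /nuhat_wo /rate /sinr.
  congr (_ * (ln (1 + _ / (_ + _)) / _)).
  apply: eq_bigl => l /=.
  case: (eqVneq l i) => [->|li] /=; last by [].
  by rewrite (eq_sym (b i)) (negbTE bji) /= andbF.
rewrite /Uhat [X in _ = X - _](bigID (fun j => b j == b i)) /=.
rewrite [X in _ = _ - X](bigID (fun j => b j == b i)) /=.
have eB : \sum_(j | (b j == b i) && (j != i)) nuhat_wo W Pw P0 g G i b j w =
          \sum_(j | (j != i) && (b j == b i)) nuhat_wo W Pw P0 g G i a j w.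
  apply: eq_big => [j|j /andP[_ ji]]; first by rewrite andbC.
  exact: L1.
have eC : \sum_(j | b j != b i) nuhat W Pw P0 g G b j w =
          \sum_(j | (j != i) && (b j != b i)) nuhat_wo W Pw P0 g G i a j w.
  apply: eq_big => [j|j bji].
    by case: (eqVneq j i) => [->|]; rewrite ?eqxx.
  have ji : j != i by apply: contraNneq bji => ->.
  by rewrite L2 // L1.
by rewrite eB eC opprD addrACA subrr addr0.
Qed.

Theorem proposition1 (R : realType) (d : measure_display) (Omega : measurableType d)
  (P : probability Omega R) (D F : finType)
  (W : F -> R) (Pw : D -> R) (P0 : R)
  (g : D -> Omega -> R) (G : D -> D -> Omega -> R)
  (N : nat) (Uk : 'I_N -> D -> {ffun D -> F} -> Omega -> R) :
  (forall c, 0 < W c) -> (forall j, 0 < Pw j) -> 0 < P0 ->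
  (forall j, measurable_fun setT (g j)) ->
  (forall l j, measurable_fun setT (G l j)) ->
  (forall j w, 0 <= g j w) -> (forall l j w, 0 <= G l j w) ->
  (forall a j, P.-integrable setT (EFin \o nuhat W Pw P0 g G a j)) ->
  (forall i a j, P.-integrable setT (EFin \o nuhat_wo W Pw P0 g G i a j)) ->
  (0 < N)%N ->
  (forall k i a, measurable_fun setT (Uk k i a)) ->
  (forall k i a, ident_distr P (Uk k i a) (Uhat W Pw P0 g G i a)) ->
  (forall i a, mutually_independent P (fun k => Uk k i a)) ->
  let U i a := ('E_P[(fun w => N%:R^-1 * \sum_(k < N) Uk k i a w)%R])%E in
  let phi a := ('E_P[(fun w => \sum_(j : D) nuhat W Pw P0 g G a j w)%R])%E in
  forall (i : D) (a : {ffun D -> F}) (c c' : F),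
    (U i (upd a i c) - U i (upd a i c') = phi (upd a i c) - phi (upd a i c'))%E.
Proof.
move=> W0 Pw0 P00 mg mG g0 G0 intnu intnuwo N0 mUk idUk _ U phi i a c c'.
rewrite /U /phi !expectation.unlock.
pose K w := \sum_(j | j != i) nuhat_wo W Pw P0 g G i a j w.
have [intK _] := int_sum (fun j => j != i) (intnuwo i a).
pose S c0 w := \sum_(j : D) nuhat W Pw P0 g G (upd a i c0) j w.
have intS c0 : P.-integrable setT (EFin \o S c0).
  exact: (int_sum predT (intnu (upd a i c0))).1.
have eUh c0 : Uhat W Pw P0 g G i (upd a i c0) = fun w => S c0 w - K w.
  by apply/funext => w; rewrite key_id.
have intUh c0 : P.-integrable setT (EFin \o Uhat W Pw P0 g G i (upd a i c0)).
  rewrite eUh (_ : EFin \o _ = (EFin \o S c0) \- (EFin \o K))%E; last first.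
    by apply/funext => w /=; rewrite EFinB.
  exact: integrableB.
have EUh c0 : (\int[P]_w (Uhat W Pw P0 g G i (upd a i c0) w)%:E =
    \int[P]_w (S c0 w)%:E - \int[P]_w (K w)%:E)%E.
  rewrite eUh; under eq_integral do rewrite EFinB.
  exact: integralB_EFin.
have mUh c0 : measurable_fun setT (Uhat W Pw P0 g G i (upd a i c0)).
  by have /integrableP[/measurable_EFinP] := intUh c0.
have EU c0 : (\int[P]_w (N%:R^-1 * \sum_(k < N) Uk k i (upd a i c0) w)%:E =
    \int[P]_w (Uhat W Pw P0 g G i (upd a i c0) w)%:E)%E.
  have intUk k : P.-integrable setT (EFin \o Uk k i (upd a i c0)).
    exact: (ident_integrable (mUk _ _ _) (mUh c0) (idUk _ _ _) (intUh c0)).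
  have [intSk ESk] := int_sum predT intUk.
  under eq_integral do rewrite EFinM.
  rewrite integralZl //= ESk.
  under eq_bigr do rewrite (ident_E (mUk _ _ _) (mUh c0) (idUk _ _ _)).
  have fin : (\int[P]_w (Uhat W Pw P0 g G i (upd a i c0) w)%:E)%E \is a fin_num.
    exact: (integrable_fin_num measurableT (intUh c0)).
  rewrite -(fineK fin) sumEFin sumr_const card_ord -EFinM.
  congr EFin; set r := fine _; rewrite -(mulr_natr r) mulrCA mulVf ?mulr1 //.
  by rewrite pnatr_eq0 -lt0n.
rewrite !EU !EUh.
have finS c0 : (\int[P]_w (S c0 w)%:E)%E \is a fin_num by exact: (integrable_fin_num measurableT (intS c0)).
have finK : (\int[P]_w (K w)%:E)%E \is a fin_num by exact: (integrable_fin_num measurableT intK).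
rewrite -(fineK (finS c)) -(fineK (finS c')) -(fineK finK) -!EFinB.
by congr EFin; rewrite opprB addrA subrK.
Qed.
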